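(* Let $n \in \mathbb{N}$ and let $(F, M, \mathcal{R}, c)$ be an instance of the feasibility problem such that either (i) $c_r \in \{1, 2, \dots, n\}$ for all $r \in \mathcal{R}$ and $R_i > 0$ for every $i = 1, \dots, n$; or (ii) $c_r \in \{2^0, 2^1, \dots, 2^n\}$ for all $r \in \mathcal{R}$ and $R_{2^i} > 0$ for every $i = 0, \dots, n$. Then the instance is feasible if and only if $$F + M \le \sum_{r \in \mathcal{R}} c_r.$$
   Context: An instance $(F, M, \mathcal{R}, c)$ of the feasibility problem (of patient-to-room assignment with gender separation, for a single time period) consists of nonnegative integers $F$ (number of female patients) and $M$ (number of male patients), a finite set $\mathcal{R}$ of rooms, and a capacity $c_r \in \mathbb{N}$ (positive integer) for each room $r \in \mathcal{R}$. The instance is called feasible if there exists a subset $S \subseteq \mathcal{R}$ with $\sum_{r \in S} c_r \ge F$ and $\sum_{r \in \mathcal{R} \setminus S} c_r \ge M$. For $k \in \mathbb{N}$, $R_k := |\{ r \in \mathcal{R} : c_r = k\}|$ denotes the number of rooms of capacity $k$. *)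

(* Defs.v *)
From mathcomp Require Import all_boot.
Set Implicit Arguments. Unset Strict Implicit. Unset Printing Implicit Defensive.

(* An instance (F, M, R, c): rooms form a finite type [Room], capacities
   [c : Room -> nat] are positive integers. *)

(* Feasibility: some subset S of rooms holds the F female patients and the
   complement holds the M male patients. *)
Definition feasible (F M : nat) (Room : finType) (c : Room -> nat) : Prop :=
  exists S : {set Room},
    F <= \sum_(r in S) c r /\ M <= \sum_(r in ~: S) c r.

Definition nrooms (Room : finType) (c : Room -> nat) (k : nat) : nat :=
  #|[set r : Room | c r == k]|.

(* Main.v *)
Require Import Defs.
From mathcomp Require Import all_boot.

Section S.
Variables (Room : finType) (c : Room -> nat).

Lemma sub_sum (P Q : pred Room) : (forall r, P r -> Q r) ->
  \sum_(r | P r) c r <= \sum_(r | Q r) c r.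
Proof.
move=> PQ; rewrite [X in X <= _]big_mkcond [X in _ <= X]big_mkcond /=.
apply: leq_sum => r _; case: ifP => // /PQ ->; exact: leqnn.
Qed.

Lemma all_sums n : forall A : {set Room}, #|A| <= n ->
  (forall r, r \in A -> c r <= 1 + \sum_(r' in A | c r' < c r) c r') ->
  forall t, t <= \sum_(r in A) c r -> exists2 S : {set Room}, S \subset A & \sum_(r in S) c r = t.
Proof.
elim: n => [|n IH] A hA HP t ht.
  move: hA HP ht; rewrite leqn0 => /eqP/cards0_eq -> _ ht.
  exists set0 => //; move: ht; rewrite !big_set0 leqn0 => /eqP ->; done.
case: (set_0Vmem A) => [A0|[r0 r0A]].
  exists set0; first by rewrite sub0set.
  by move: ht; rewrite A0 !big_set0 leqn0 => /eqP ->.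
pose m := [arg max_(r > r0 in A) c r].
have [mA mmax] : m \in A /\ forall r, r \in A -> c r <= c m.
  by rewrite /m; case: arg_maxnP => // x xA H; split.
set A' := A :\ m.
have hA' : #|A'| <= n by move: hA; rewrite (cardsD1 m A) mA add1n ltnS.
have HP' : forall r, r \in A' -> c r <= 1 + \sum_(r' in A' | c r' < c r) c r'.
  move=> r; rewrite in_setD1 => /andP [rm rA].
  apply: (leq_trans (HP r rA)); rewrite leq_add2l; apply: sub_sum => r' /andP [r'A lt].
  rewrite in_setD1 r'A lt andbT andbT; apply/eqP => e; subst r'.
  by move: (mmax r rA); rewrite leqNgt lt.
have sumA : \sum_(r in A) c r = c m + \sum_(r in A') c r by rewrite (big_setD1 m mA).
case: (leqP t (\sum_(r in A') c r)) => tle.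
  have [S SA' <-] := IH A' hA' HP' t tle.
  exists S => //; apply: (subset_trans SA'); exact: subD1set.
have lm : c m <= t.
  apply: (leq_trans (HP m mA)); rewrite add1n; apply: leq_trans tle.
  rewrite ltnS; apply: sub_sum => r /andP [rA lt]; rewrite in_setD1 rA andbT.
  by apply/eqP => e; subst r; rewrite ltnn in lt.
have tle' : t - c m <= \sum_(r in A') c r by rewrite leq_subLR -sumA.
have [S SA' HS] := IH A' hA' HP' (t - c m) tle'.
exists (m |: S).
  by rewrite subUset sub1set mA (subset_trans SA') // subD1set.
have mS : m \notin S by apply/negP => /(subsetP SA'); rewrite in_setD1 eqxx.
by rewrite big_setU1 //= HS subnKC.
Qed.

Lemma pickw k r : 0 < nrooms c k -> c (odflt r [pick r' | c r' == k]) = k.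
Proof.
rewrite /nrooms card_gt0 => /set0Pn [x]; rewrite inE => /eqP xk.
case: pickP => [y /eqP //|/(_ x)]; by rewrite xk eqxx.
Qed.

Lemma cond_witness r k (g : nat -> nat) :
  (forall i, i < k -> 0 < nrooms c (g i)) ->
  (forall i j, i < k -> j < k -> g i = g j -> i = j) ->
  (forall i, i < k -> g i < c r) -> c r <= 1 + \sum_(i < k) g i ->
  c r <= 1 + \sum_(r' in [set: Room] | c r' < c r) c r'.
Proof.
move=> hn hinj hlt hs; apply: (leq_trans hs); rewrite leq_add2l.
pose f (i : 'I_k) := odflt r [pick r' | c r' == g i].
have cf : forall i : 'I_k, c (f i) = g i by move=> i; apply: pickw; apply: hn.
have -> : \sum_(i < k) g i = \sum_(i < k) c (f i) by apply: eq_bigr => i _; rewrite cf.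
rewrite -(big_imset (fun x => c x) (h := f) (A := predT)).
  apply: sub_sum => x /imsetP [i _ ->]; rewrite inE /= cf; exact: hlt.
move=> i j _ _ /(congr1 c); rewrite !cf => /hinj e; apply: val_inj; exact: e.
Qed.

End S.

Lemma pow_sum j : 2 ^ j <= 1 + \sum_(i < j) 2 ^ i.
Proof.
elim: j => [|j IH] //; rewrite big_ord_recr /= expnS mul2n -addnn addnA.
by rewrite leq_add2r.
Qed.

Theorem mainTheorem1 (n F M : nat) (Room : finType) (c : Room -> nat)
  (cpos : forall r, 0 < c r) :
  ( (forall r, 1 <= c r <= n) /\ (forall i, 1 <= i <= n -> 0 < nrooms c i) )
  \/
  ( (forall r, exists2 i, i <= n & c r = 2 ^ i) /\
    (forall i, i <= n -> 0 < nrooms c (2 ^ i)) ) ->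
  (feasible F M c <-> F + M <= \sum_(r : Room) c r).
Proof.
move=> H.
have tot : forall S : {set Room}, \sum_(r in S) c r + \sum_(r in ~: S) c r = \sum_(r : Room) c r.
  move=> S; rewrite [RHS](bigID (fun r => r \in S)) /=.
  by congr (_ + _); apply: eq_bigl => r; rewrite ?inE.
split.
  move=> [S [hF hM]]; rewrite -(tot S); exact: leq_add.
move=> hT.
have HP : forall r, r \in [set: Room] ->
    c r <= 1 + \sum_(r' in [set: Room] | c r' < c r) c r'.
  move=> r _; case: H => [[hc hn]|[hc hn]].
    have /andP [c1 cn] := hc r.
    apply: (@cond_witness _ _ r (c r).-1 (fun i => i.+1)).
    - move=> i hi; apply: hn; apply/andP; split => //.
      by apply: leq_trans cn; apply: leq_trans hi (leq_pred _).
    - by move=> i j _ _ [].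
    - by move=> i; case: (c r).

    - case: (c r) c1 => // k _ /=; rewrite add1n ltnS.
      have : \sum_(i < k) 1 <= \sum_(i < k) i.+1 by apply: leq_sum.
      by rewrite sum_nat_const card_ord muln1.
  have [j jn cj] := hc r.
  apply: (@cond_witness _ _ r j (fun i => 2 ^ i)).
  - move=> i hi; apply: hn; apply: leq_trans jn; exact: ltnW.
  - by move=> i k _ _ /eqP; rewrite eqn_exp2l // => /eqP.
  - by move=> i hi; rewrite cj ltn_exp2l.
  - by rewrite cj pow_sum.
have hF : F <= \sum_(r in [set: Room]) c r.
  rewrite (eq_bigl predT); last by move=> r; rewrite inE.
  apply: leq_trans hT; exact: leq_addr.
have [S _ hS] := @all_sums Room c _ _ (leqnn _) HP _ hF.
exists S; split; first by rewrite hS.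
by rewrite -(leq_add2l F) -{2}hS tot.
Qed.
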